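(* Let $\{\sigma^{(n)}_{AB}\}_{n\ge1}$ be a sequence of density matrices on a fixed finite-dimensional space $\mathcal H_A\otimes\mathcal H_B$ such that $\lim_{n\to\infty}\sigma^{(n)}_{AB}=\rho_{AB}$ and $\lim_{n\to\infty}\mu(\sigma^{(n)}_{AB})=\lambda$. Then $\mu(\rho_{AB})\leq\lambda$. In particular, if $\lambda=0$ then $\rho_{AB}=\rho_A\otimes\rho_B$ is a product state.
   Context: For a bipartite density matrix $\rho_{AB}$ on $\mathcal H_A\otimes\mathcal H_B$ with reduced states $\rho_A=\mathrm{tr}_B\rho_{AB}$, $\rho_B=\mathrm{tr}_A\rho_{AB}$, the maximal correlation is $\mu(\rho_{AB})=\max |\mathrm{tr}(\rho_{AB}\, X_A\otimes Y_B^\dagger)|$, the maximum over $X_A\in\mathbf L(\mathcal H_A)$, $Y_B\in\mathbf L(\mathcal H_B)$ subject to $\mathrm{tr}(\rho_A X_A)=\mathrm{tr}(\rho_B Y_B)=0$ and $\mathrm{tr}(\rho_A X_AX_A^\dagger)=\mathrm{tr}(\rho_B Y_BY_B^\dagger)=1$. *)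

(* Defs.v *)
From HB Require Import structures.
From mathcomp Require Import all_boot all_order all_algebra.
From mathcomp Require Import all_classical all_reals.
From mathcomp Require Import topology normedtype sequences.
From mathcomp Require Import complex mxtens.

Set Implicit Arguments.
Unset Strict Implicit.
Unset Printing Implicit Defensive.

Import Order.TTheory GRing.Theory Num.Theory.
Import numFieldNormedType.Exports.
Local Open Scope classical_set_scope.
Local Open Scope ring_scope.

(* Complex numbers over a real type R are R[i]; the state space is
   H_A (x) H_B = C^dA (x) C^dB = C^(dA*dB), with the Kronecker indexing
   of mxtens (index (a,b) <-> mxtens_index (a,b)). *)

Definition adjmx (R : realType) (m n : nat) (A : 'M[R[i]]_(m, n)) : 'M[R[i]]_(n, m) :=
  map_mx (@conjc R) A^T.

Definition density (R : realType) (d : nat) (rho : 'M[R[i]]_d) : Prop :=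
  [/\ adjmx rho = rho,
      (forall v : 'cV[R[i]]_d, 0 <= (adjmx v *m rho *m v) 0 0)
    & \tr rho = 1].

Definition ptrB (R : realType) (dA dB : nat) (rho : 'M[R[i]]_(dA * dB)) : 'M[R[i]]_dA :=
  \matrix_(a, a') \sum_(b < dB) rho (mxtens_index (a, b)) (mxtens_index (a', b)).

Definition ptrA (R : realType) (dA dB : nat) (rho : 'M[R[i]]_(dA * dB)) : 'M[R[i]]_dB :=
  \matrix_(b, b') \sum_(a < dA) rho (mxtens_index (a, b)) (mxtens_index (a, b')).

(* maximal correlation: the supremum (the maximum, attained by compactness)
   of |tr(rho (X (x) Y^dagger))| over the admissible X, Y *)
Definition maxcorr (R : realType) (dA dB : nat) (rho : 'M[R[i]]_(dA * dB)) : R :=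
  sup [set r : R | exists (X : 'M[R[i]]_dA) (Y : 'M[R[i]]_dB),
         [/\ \tr (ptrB rho *m X) = 0, \tr (ptrA rho *m Y) = 0,
             \tr (ptrB rho *m (X *m adjmx X)) = 1,
             \tr (ptrA rho *m (Y *m adjmx Y)) = 1
           & r = Normc.normc (\tr (rho *m (X *t adjmx Y)))]].

(* convergence of a sequence of complex matrices (entrywise, i.e. in any
   norm on the finite-dimensional space), via real and imaginary parts *)
Definition mx_cvg (R : realType) (m n : nat) (s : nat -> 'M[R[i]]_(m, n))
  (L : 'M[R[i]]_(m, n)) : Prop :=
  forall i j,
    (fun k => complex.Re (s k i j)) @ \oo --> complex.Re (L i j) /\
    (fun k => complex.Im (s k i j)) @ \oo --> complex.Im (L i j).

(* Main.v *)
Require Import Defs.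
From HB Require Import structures.
From mathcomp Require Import all_boot all_order all_algebra.
From mathcomp Require Import all_classical all_reals.
From mathcomp Require Import topology normedtype sequences.
From mathcomp Require Import complex mxtens.
From mathcomp Require Import ring lra.

Set Implicit Arguments.
Unset Strict Implicit.
Unset Printing Implicit Defensive.

Import Order.TTheory GRing.Theory Num.Theory.
Import numFieldNormedType.Exports.
Local Open Scope classical_set_scope.
Local Open Scope ring_scope.
Section Alg.
Variable R : realType.
Local Notation C := R[i].
Section CSr.
Local Open Scope complex_scope.


Lemma CSnum (p q c : C) :
  (forall a b : C, 0 <= a * conjc a * p + a * conjc b * c + b * conjc a * conjc c
                         + b * conjc b * q) ->
  (complex.Re c) ^+ 2 + (complex.Im c) ^+ 2 <= complex.Re p * complex.Re q.
Proof.
move=> H.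
have H0 := H 1 0; have H1 := H 0 1.
case: p H H0 H1 => p0 p1; case: q => q0 q1; case: c => x y /= H H0 H1.
have H2 := H (q0 +i* 0) (- (x +i* y)).
have H3 := H (- (x -i* y)) (p0 +i* 0).
have H4 := H 1 (- (x +i* y)).
move: H0 H1 H2 H3 H4; rewrite !lecE /=.
move=> /andP[/eqP e0 h0] /andP[/eqP e1 h1] /andP[_ h2] /andP[_ h3] /andP[_ h4].

have ep1 : p1 = 0 by lra.
have eq1 : q1 = 0 by lra.
subst p1 q1.
have hp : 0 <= p0 by lra.
have hq : 0 <= q0 by lra.
have hN : 0 <= x ^+ 2 + y ^+ 2 by nra.
have [q0p|] := ltrP 0 q0.
  rewrite -subr_ge0; rewrite -(pmulr_rge0 _ q0p); nra.
have [p0p|] := ltrP 0 p0.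
  rewrite -subr_ge0; rewrite -(pmulr_rge0 _ p0p); nra.
move=> hp0 hq0; have ep : p0 = 0 by lra.
have eq : q0 = 0 by lra.
subst p0 q0; nra.
Qed.
End CSr.

Lemma adjmxE m n (A : 'M[C]_(m,n)) i j : adjmx A i j = conjc (A j i).
Proof. by rewrite /adjmx !mxE. Qed.

Lemma adjmxK m n (A : 'M[C]_(m,n)) : adjmx (adjmx A) = A.
Proof. by apply/matrixP=> i j; rewrite !adjmxE conjcK. Qed.

Lemma adjmx_mul m n p (A : 'M[C]_(m,n)) (B : 'M[C]_(n,p)) :
  adjmx (A *m B) = adjmx B *m adjmx A.
Proof.
apply/matrixP=> i j; rewrite adjmxE !mxE rmorph_sum; apply: eq_bigr=> k _.
by rewrite !adjmxE rmorphM mulrC.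
Qed.

Lemma adjmxD m n (A B : 'M[C]_(m,n)) : adjmx (A + B) = adjmx A + adjmx B.
Proof. by apply/matrixP=> i j; rewrite !mxE rmorphD. Qed.

Lemma adjmxN m n (A : 'M[C]_(m,n)) : adjmx (- A) = - adjmx A.
Proof. by apply/matrixP=> i j; rewrite !mxE rmorphN. Qed.

Lemma adjmxZ m n c (A : 'M[C]_(m,n)) : adjmx (c *: A) = conjc c *: adjmx A.
Proof. by apply/matrixP=> i j; rewrite !mxE rmorphM. Qed.

Lemma adjmx1 n : adjmx (1%:M : 'M[C]_n) = 1%:M.
Proof. by apply/matrixP=> i j; rewrite !adjmxE !mxE eq_sym rmorph_nat. Qed.

Lemma adjmx_tens m n p q (A : 'M[C]_(m,n)) (B : 'M[C]_(p,q)) :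
  adjmx (A *t B) = adjmx A *t adjmx B.
Proof. by apply/matrixP=> i j; rewrite !mxE rmorphM. Qed.

Lemma tr_adjmx n (A : 'M[C]_n) : \tr (adjmx A) = conjc (\tr A).
Proof. by rewrite /mxtrace rmorph_sum; apply: eq_bigr=> i _; rewrite adjmxE. Qed.

Lemma tensmxDl m n p q (A B : 'M[C]_(m,n)) (N : 'M[C]_(p,q)) :
  (A + B) *t N = A *t N + B *t N.
Proof. by apply/matrixP=> i j; rewrite !mxE mulrDl. Qed.

Lemma tensmxNl m n p q (A : 'M[C]_(m,n)) (N : 'M[C]_(p,q)) :
  (- A) *t N = - (A *t N).
Proof. by apply/matrixP=> i j; rewrite !mxE mulNr. Qed.

Lemma tensmxZl m n p q c (A : 'M[C]_(m,n)) (N : 'M[C]_(p,q)) :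
  (c *: A) *t N = c *: (A *t N).
Proof. by apply/matrixP=> i j; rewrite !mxE mulrA. Qed.

Lemma tensmxDr m n p q (A : 'M[C]_(m,n)) (M N : 'M[C]_(p,q)) :
  A *t (M + N) = A *t M + A *t N.
Proof. by apply/matrixP=> i j; rewrite !mxE mulrDr. Qed.

Lemma tensmxNr m n p q (A : 'M[C]_(m,n)) (N : 'M[C]_(p,q)) :
  A *t (- N) = - (A *t N).
Proof. by apply/matrixP=> i j; rewrite !mxE mulrN. Qed.

Lemma tensmxZr m n p q c (A : 'M[C]_(m,n)) (N : 'M[C]_(p,q)) :
  A *t (c *: N) = c *: (A *t N).
Proof. by apply/matrixP=> i j; rewrite !mxE mulrCA. Qed.

Lemma tens11 m n : (1%:M : 'M[C]_m) *t (1%:M : 'M[C]_n) = 1%:M.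
Proof.
apply/matrixP=> i j.
case: (mxtens_indexP i)=> a b; case: (mxtens_indexP j)=> a' b'.
rewrite tensmxE !mxE -natrM mulnb; congr ((_ : bool)%:R).
apply/andP/eqP => [[/eqP-> /eqP->]//|/(congr1 (@mxtens_unindex m n))].
by rewrite !mxtens_indexK => -[-> ->].
Qed.

Lemma sum_tens m n (F : 'I_(m * n) -> C) :
  \sum_(k < m * n) F k = \sum_(a < m) \sum_(b < n) F (mxtens_index (a, b)).
Proof.
rewrite pair_big /=; apply: reindex=> /=.
exists (@mxtens_unindex m n)=> k _.
- by case: k => a b; rewrite mxtens_indexK.
- by rewrite -surjective_pairing mxtens_unindexK.
Qed.

Lemma tr_mulE n (A B : 'M[C]_n) : \tr (A *m B) = \sum_i \sum_j A i j * B j i.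
Proof. by apply: eq_bigr=> i _; rewrite mxE. Qed.


Lemma sum_delta n (F : 'I_n -> C) i : \sum_j F j * (j == i)%:R = F i.
Proof.
rewrite (bigD1 i) //= eqxx mulr1 big1 ?addr0 // => j /negPf->.
by rewrite mulr0.
Qed.

Lemma sum_delta' n (F : 'I_n -> C) i : \sum_j (i == j)%:R * F j = F i.
Proof.
rewrite -[RHS](sum_delta F); apply: eq_bigr=> j _; by rewrite mulrC eq_sym.
Qed.

Lemma trT dA dB (s : 'M[C]_(dA * dB)) (M : 'M[C]_dA) (N : 'M[C]_dB) :
  \tr (s *m (M *t N)) = \sum_a \sum_b \sum_a' \sum_b'
     s (mxtens_index (a, b)) (mxtens_index (a', b')) * (M a' a * N b' b).
Proof.
rewrite tr_mulE sum_tens; apply: eq_bigr=> a _; apply: eq_bigr=> b _.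
rewrite sum_tens; apply: eq_bigr=> a' _; apply: eq_bigr=> b' _.
by rewrite tensmxE.
Qed.

Lemma ptrB_tr dA dB (s : 'M[C]_(dA * dB)) (M : 'M[C]_dA) :
  \tr (ptrB s *m M) = \tr (s *m (M *t (1%:M : 'M_dB))).
Proof.
rewrite trT tr_mulE; apply: eq_bigr=> a _.
rewrite exchange_big /=; apply: eq_bigr=> a' _.
rewrite mxE mulr_suml; apply: eq_bigr => b _.
rewrite -(sum_delta (fun b' => s (mxtens_index (a, b)) (mxtens_index (a', b')) * M a' a) b).
by apply: eq_bigr => b' _; rewrite mxE !mulrA.
Qed.

Lemma ptrA_tr dA dB (s : 'M[C]_(dA * dB)) (N : 'M[C]_dB) :
  \tr (ptrA s *m N) = \tr (s *m ((1%:M : 'M_dA) *t N)).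
Proof.
rewrite trT tr_mulE.
transitivity (\sum_a \sum_b \sum_b' s (mxtens_index (a, b)) (mxtens_index (a, b')) * N b' b).
  rewrite (eq_bigr (fun b => \sum_a \sum_b' s (mxtens_index (a, b)) (mxtens_index (a, b')) * N b' b)).
    by rewrite exchange_big.
  move=> b _; rewrite exchange_big /=; apply: eq_bigr=> b' _.
  by rewrite mxE mulr_suml.
apply: eq_bigr=> a _; apply: eq_bigr=> b _; rewrite exchange_big /=.
apply: eq_bigr=> b' _.
rewrite -(sum_delta (fun a' => s (mxtens_index (a, b)) (mxtens_index (a', b')) * N b' b) a).
apply: eq_bigr => a' _; rewrite !mxE. ring.
Qed.


Section Form.
Variables (d : nat) (s : 'M[C]_d).
Definition fm (P Q : 'M[C]_d) := \tr (s *m (P *m adjmx Q)).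

Lemma fmDl P1 P2 Q : fm (P1 + P2) Q = fm P1 Q + fm P2 Q.
Proof. by rewrite /fm mulmxDl mulmxDr mxtraceD. Qed.
Lemma fmZl c P Q : fm (c *: P) Q = c * fm P Q.
Proof. by rewrite /fm -scalemxAl -scalemxAr mxtraceZ. Qed.
Lemma fmDr P Q1 Q2 : fm P (Q1 + Q2) = fm P Q1 + fm P Q2.
Proof. by rewrite /fm adjmxD mulmxDr mulmxDr mxtraceD. Qed.
Lemma fmZr c P Q : fm P (c *: Q) = conjc c * fm P Q.
Proof. by rewrite /fm adjmxZ -scalemxAr -scalemxAr mxtraceZ. Qed.
Lemma fmNl P Q : fm (- P) Q = - fm P Q.
Proof. by rewrite -scaleN1r fmZl mulN1r. Qed.
Lemma fmNr P Q : fm P (- Q) = - fm P Q.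
Proof. by rewrite -scaleN1r fmZr rmorphN rmorph1 mulN1r. Qed.

Hypothesis sH : adjmx s = s.
Hypothesis sP : forall v : 'cV[C]_d, 0 <= (adjmx v *m s *m v) 0 0.

Lemma fmH P Q : fm Q P = conjc (fm P Q).
Proof.
by rewrite /fm -tr_adjmx !adjmx_mul adjmxK sH; exact: mxtrace_mulC.
Qed.

Lemma fm_ge0 P : 0 <= fm P P.
Proof.
rewrite /fm mulmxA mxtrace_mulC /mxtrace; apply: sumr_ge0 => j _.
have -> : (adjmx P *m (s *m P)) j j = (adjmx (col j P) *m s *m col j P) 0 0.
  rewrite -mulmxA !mxE; apply: eq_bigr=> k _; rewrite !mxE; congr (_ * _).
  by apply: eq_bigr=> l _; rewrite !mxE.
exact: sP.
Qed.

Lemma fm_expand a b P Q : fm (a *: P + b *: Q) (a *: P + b *: Q) =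
  a * conjc a * fm P P + a * conjc b * fm P Q + b * conjc a * conjc (fm P Q)
  + b * conjc b * fm Q Q.
Proof.
rewrite !fmDl !fmDr !fmZl !fmZr -fmH; ring.
Qed.

Lemma fm_CS P Q : (complex.Re (fm P Q)) ^+ 2 + (complex.Im (fm P Q)) ^+ 2
   <= complex.Re (fm P P) * complex.Re (fm Q Q).
Proof. by apply: CSnum => a b; rewrite -fm_expand fm_ge0. Qed.
End Form.

End Alg.

Section Key.
Variable R : realType.
Local Notation C := R[i].
Variables (dA dB : nat).
Local Notation d := (dA * dB)%N.
Implicit Types (s : 'M[C]_d) (X : 'M[C]_dA) (Y : 'M[C]_dB).

Definition mA s X := \tr (ptrB s *m X).
Definition mB s Y := \tr (ptrA s *m Y).
Definition Cv s X Y := \tr (s *m (X *t adjmx Y)) - mA s X * mB s (adjmx Y).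
Definition VA s X := mA s (X *m adjmx X) - mA s X * conjc (mA s X).
Definition VB s Y := mB s (Y *m adjmx Y) - mB s Y * conjc (mB s Y).
Definition Sset s := [set r : R | exists (X : 'M[C]_dA) (Y : 'M[C]_dB),
         [/\ \tr (ptrB s *m X) = 0, \tr (ptrA s *m Y) = 0,
             \tr (ptrB s *m (X *m adjmx X)) = 1,
             \tr (ptrA s *m (Y *m adjmx Y)) = 1
           & r = Normc.normc (\tr (s *m (X *t adjmx Y)))]].
Lemma maxcorrE s : maxcorr s = sup (Sset s). Proof. by []. Qed.

Local Notation IA := (1%:M : 'M[C]_dA).
Local Notation IB := (1%:M : 'M[C]_dB).

Lemma fm_AA s X Z : fm s (X *t IB) (Z *t IB) = mA s (X *m adjmx Z).
Proof. by rewrite /fm adjmx_tens adjmx1 tensmx_mul mulmx1 /mA ptrB_tr. Qed.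
Lemma fm_BB s Y W : fm s (IA *t Y) (IA *t W) = mB s (Y *m adjmx W).
Proof. by rewrite /fm adjmx_tens adjmx1 tensmx_mul mulmx1 /mB ptrA_tr. Qed.
Lemma fm_AB s X W : fm s (X *t IB) (IA *t W) = \tr (s *m (X *t adjmx W)).
Proof. by rewrite /fm adjmx_tens adjmx1 tensmx_mul mulmx1 mul1mx. Qed.
Lemma fm_A1 s X : fm s (X *t IB) 1%:M = mA s X.
Proof. by rewrite /fm adjmx1 mulmx1 /mA ptrB_tr. Qed.
Lemma fm_B1 s Y : fm s (IA *t Y) 1%:M = mB s Y.
Proof. by rewrite /fm adjmx1 mulmx1 /mB ptrA_tr. Qed.
Lemma fm_1B s W : fm s 1%:M (IA *t W) = mB s (adjmx W).
Proof. by rewrite /fm adjmx_tens adjmx1 mul1mx /mB ptrA_tr. Qed.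
Lemma fm_11 s : fm s 1%:M 1%:M = \tr s.
Proof. by rewrite /fm adjmx1 !mulmx1. Qed.

Lemma fm_shift s P1 Q1 P0 Q0 a b :
  fm s (P1 - a *: P0) (Q1 - b *: Q0) =
  fm s P1 Q1 - conjc b * fm s P1 Q0 - a * fm s P0 Q1 + a * conjc b * fm s P0 Q0.
Proof. rewrite !fmDl !fmDr !fmNl !fmNr !fmZl !fmZr; ring. Qed.

Lemma shiftA X a : (X - a%:M) *t IB = X *t IB - a *: 1%:M.
Proof. by rewrite tensmxDl tensmxNl -[a%:M]scalemx1 tensmxZl tens11. Qed.
Lemma shiftB Y b : IA *t (Y - b%:M) = IA *t Y - b *: 1%:M.
Proof. by rewrite tensmxDr tensmxNr -[b%:M]scalemx1 tensmxZr tens11. Qed.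


Lemma Cv_fm s : density s -> forall X Y, Cv s X Y =
  fm s ((X - (mA s X)%:M) *t IB) (IA *t (Y - (mB s Y)%:M)).
Proof.
case=> sH _ tr1 X Y.
rewrite shiftA shiftB fm_shift fm_AB fm_A1 fm_11 tr1 fm_1B /Cv; ring.
Qed.

Lemma VA_fm s : density s -> forall X, VA s X =
  fm s ((X - (mA s X)%:M) *t IB) ((X - (mA s X)%:M) *t IB).
Proof.
case=> sH _ tr1 X.
rewrite shiftA fm_shift fm_AA fm_A1 fm_11 tr1 (fmH sH) fm_A1 /VA; ring.
Qed.

Lemma VB_fm s : density s -> forall Y, VB s Y =
  fm s (IA *t (Y - (mB s Y)%:M)) (IA *t (Y - (mB s Y)%:M)).
Proof.
case=> sH _ tr1 Y.
rewrite shiftB fm_shift fm_BB fm_B1 fm_11 tr1 (fmH sH) fm_B1 /VB; ring.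
Qed.

End Key.

Section Cplx.
Variable R : realType.
Local Notation C := R[i].
Local Open Scope complex_scope.

Lemma normc_sq (z : C) : Normc.normc z ^+ 2 = complex.Re z ^+ 2 + complex.Im z ^+ 2.
Proof. by case: z => a b /=; rewrite sqr_sqrtr // addr_ge0 // sqr_ge0. Qed.

Lemma normc_ge0 (z : C) : 0 <= Normc.normc z.
Proof. by case: z => a b /=; rewrite sqrtr_ge0. Qed.

Lemma ge0C (z : C) : 0 <= z -> z = (complex.Re z)%:C /\ 0 <= complex.Re z.
Proof. by case: z => a b; rewrite lecE /= => /andP[/eqP -> h]. Qed.

Lemma realCM (k l : R) : k%:C * l%:C = (k * l)%:C :> C.
Proof. by simpc. Qed.

Lemma normc_realM (k : R) (z : C) : Normc.normc (k%:C * z) = `|k| * Normc.normc z.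
Proof. by rewrite Normc.normcM /= expr0n /= addr0 sqrtr_sqr. Qed.

Lemma ReC (k : R) : complex.Re (k%:C : C) = k. Proof. by []. Qed.

End Cplx.

Section Key2.
Variable R : realType.
Local Notation C := R[i].
Local Open Scope complex_scope.
Variables (dA dB : nat).
Local Notation d := (dA * dB)%N.
Local Notation IA := (1%:M : 'M[C]_dA).
Local Notation IB := (1%:M : 'M[C]_dB).
Variable s : 'M[C]_d.
Hypothesis hd : density s.

Lemma Sset_ub : ubound (Sset s) 1.
Proof.
have [sH sP tr1] := hd.
move=> r [X [Y [_ _ hX hY ->]]].
have CS := fm_CS sH sP (X *t IB) (IA *t Y).
rewrite fm_AA fm_BB fm_AB /mA /mB hX hY /= mulr1 -normc_sq in CS.
have := normc_ge0 (\tr (s *m (X *t adjmx Y))); nra.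
Qed.

Lemma maxcorr_ge0 : 0 <= maxcorr s.
Proof.
rewrite maxcorrE; have [[r Sr]|ne] := pselect (Sset s !=set0).
  apply: le_trans (sup_upper_bound (conj (ex_intro _ r Sr) (ex_intro _ 1 Sset_ub)) Sr).
  by case: Sr => X [Y [_ _ _ _ ->]]; exact: normc_ge0.
suff -> : Sset s = set0 by rewrite sup0.
by apply/seteqP; split=> x // Sx; apply: ne; exists x.
Qed.


Lemma fm_P1 (X : 'M[C]_dA) : fm s ((X - (mA s X)%:M) *t IB) 1%:M = 0.
Proof.
have [_ _ tr1] := hd.
by rewrite shiftA fmDl fmNl fmZl fm_A1 fm_11 tr1 mulr1 subrr.
Qed.

Lemma fm_Q1 (Y : 'M[C]_dB) : fm s (IA *t (Y - (mB s Y)%:M)) 1%:M = 0.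
Proof.
have [_ _ tr1] := hd.
by rewrite shiftB fmDl fmNl fmZl fm_B1 fm_11 tr1 mulr1 subrr.
Qed.

Lemma key_gen (X' : 'M[C]_dA) (Y' : 'M[C]_dB) :
  fm s (X' *t IB) 1%:M = 0 -> fm s (IA *t Y') 1%:M = 0 ->
  complex.Re (fm s (X' *t IB) (IA *t Y')) ^+ 2 + complex.Im (fm s (X' *t IB) (IA *t Y')) ^+ 2 <=
  maxcorr s ^+ 2 * complex.Re (fm s (X' *t IB) (X' *t IB)) * complex.Re (fm s (IA *t Y') (IA *t Y')).
Proof.
move=> P1 Q1.
have [sH sP tr1] := hd.
have CS := fm_CS sH sP (X' *t IB) (IA *t Y').
have [ep p0] := ge0C (fm_ge0 sP (X' *t IB)).
have [eq q0] := ge0C (fm_ge0 sP (IA *t Y')).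
move: CS ep p0 eq q0.
move: (complex.Re (fm s (X' *t IB) (X' *t IB))) => p.
move: (complex.Re (fm s (IA *t Y') (IA *t Y'))) => q.
move=> CS ep p0 eq q0.
have m0 := sqr_ge0 (maxcorr s).
have [pp|pn] := ltrP 0 p; last first.
  have ep0 : p = 0 by apply/eqP; rewrite eq_le pn p0.
  subst p; rewrite mulr0 mul0r; by move: CS; rewrite mul0r.
have [qp|qn] := ltrP 0 q; last first.
  have eq0 : q = 0 by apply/eqP; rewrite eq_le qn q0.
  subst q; rewrite mulr0; by move: CS; rewrite mulr0.
pose sp := Num.sqrt p; pose sq := Num.sqrt q.
have spp : 0 < sp by rewrite sqrtr_gt0.
have sqp : 0 < sq by rewrite sqrtr_gt0.
have sp2 : sp ^+ 2 = p by rewrite sqr_sqrtr // ltW.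
have sq2 : sq ^+ 2 = q by rewrite sqr_sqrtr // ltW.
pose X'' := (sp^-1)%:C *: X'; pose Y'' := (sq^-1)%:C *: Y'.
have SX : Sset s (Normc.normc (fm s (X' *t IB) (IA *t Y')) / (sp * sq)).
  exists X'', Y''; split.
  - by rewrite -/(mA s X'') -fm_A1 tensmxZl fmZl P1 mulr0.
  - by rewrite -/(mB s Y'') -fm_B1 tensmxZr fmZl Q1 mulr0.
  - rewrite -/(mA s (X'' *m adjmx X'')) -fm_AA tensmxZl fmZl fmZr conjc_real ep !realCM.
    rewrite (_ : sp^-1 * (sp^-1 * p) = 1) // -sp2; field; exact: lt0r_neq0.
  - rewrite -/(mB s (Y'' *m adjmx Y'')) -fm_BB tensmxZr fmZl fmZr conjc_real eq !realCM.
    rewrite (_ : sq^-1 * (sq^-1 * q) = 1) // -sq2; field; exact: lt0r_neq0.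
  - rewrite -fm_AB tensmxZl tensmxZr fmZl fmZr conjc_real mulrA realCM.
    rewrite normc_realM ger0_norm ?mulr_ge0 ?invr_ge0 ?ltW // mulrC invfM.
    by rewrite mulrC.
have le1 := sup_upper_bound (conj (ex_intro _ _ SX) (ex_intro _ 1 (Sset_ub))) SX.
rewrite -maxcorrE ler_pdivrMr ?mulr_gt0 // in le1.
have n0 := normc_ge0 (fm s (X' *t IB) (IA *t Y')).
rewrite -normc_sq -sp2 -sq2.
move: le1 n0; move: (Normc.normc _) => n le1 n0.
nra.
Qed.

Lemma key (X : 'M[C]_dA) (Y : 'M[C]_dB) :
  complex.Re (Cv s X Y) ^+ 2 + complex.Im (Cv s X Y) ^+ 2 <=
  maxcorr s ^+ 2 * complex.Re (VA s X) * complex.Re (VB s Y).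
Proof.
rewrite (Cv_fm hd) (VA_fm hd) (VB_fm hd).
by apply: key_gen; [exact: fm_P1 | exact: fm_Q1].
Qed.

End Key2.

Section Cvg.
Variable R : realType.
Local Notation C := R[i].
Local Open Scope complex_scope.

Definition ccvg (u : nat -> C) (l : C) :=
  (fun n => complex.Re (u n)) @ \oo --> complex.Re l /\
  (fun n => complex.Im (u n)) @ \oo --> complex.Im l.

Lemma ccvg_ext u v l : (forall n, u n = v n) -> ccvg u l -> ccvg v l.
Proof. by move=> e; have -> : v = u by apply: funext => n; rewrite e. Qed.

Lemma ccvg_cst (c : C) : ccvg (fun=> c) c.
Proof. by split; apply: cvg_cst. Qed.

Lemma ReD (x y : C) : complex.Re (x + y) = complex.Re x + complex.Re y.
Proof. by case: x; case: y. Qed.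
Lemma ImD (x y : C) : complex.Im (x + y) = complex.Im x + complex.Im y.
Proof. by case: x; case: y. Qed.
Lemma ReN (x : C) : complex.Re (- x) = - complex.Re x. Proof. by case: x. Qed.
Lemma ImN (x : C) : complex.Im (- x) = - complex.Im x. Proof. by case: x. Qed.
Lemma ReM (x y : C) : complex.Re (x * y) = complex.Re x * complex.Re y - complex.Im x * complex.Im y.
Proof. by case: x; case: y. Qed.
Lemma ImM (x y : C) : complex.Im (x * y) = complex.Re x * complex.Im y + complex.Im x * complex.Re y.
Proof. by case: x => a b; case: y => c e /=; rewrite addrC. Qed.
Lemma ReJ (x : C) : complex.Re (conjc x) = complex.Re x. Proof. by case: x. Qed.
Lemma ImJ (x : C) : complex.Im (conjc x) = - complex.Im x. Proof. by case: x. Qed.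

Lemma ccvgD u v a b : ccvg u a -> ccvg v b -> ccvg (fun n => u n + v n) (a + b).
Proof.
case=> h1 h2 [h3 h4]; split.
  have -> : (fun n => complex.Re (u n + v n)) = (fun n => complex.Re (u n) + complex.Re (v n)).
    by apply: funext => n; rewrite ReD.
  by rewrite ReD; exact: cvgD h1 h3.
have -> : (fun n => complex.Im (u n + v n)) = (fun n => complex.Im (u n) + complex.Im (v n)).
  by apply: funext => n; rewrite ImD.
by rewrite ImD; exact: cvgD h2 h4.
Qed.

Lemma ccvgN u a : ccvg u a -> ccvg (fun n => - u n) (- a).
Proof.
case=> h1 h2; split.
  have -> : (fun n => complex.Re (- u n)) = (fun n => - complex.Re (u n)).
    by apply: funext => n; rewrite ReN.
  by rewrite ReN; exact: cvgN h1.
have -> : (fun n => complex.Im (- u n)) = (fun n => - complex.Im (u n)).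
  by apply: funext => n; rewrite ImN.
by rewrite ImN; exact: cvgN h2.
Qed.

Lemma ccvgB u v a b : ccvg u a -> ccvg v b -> ccvg (fun n => u n - v n) (a - b).
Proof. by move=> h1 h2; apply: ccvgD h1 (ccvgN h2). Qed.

Lemma ccvgJ u a : ccvg u a -> ccvg (fun n => conjc (u n)) (conjc a).
Proof.
case=> h1 h2; split.
  have -> : (fun n => complex.Re (conjc (u n))) = (fun n => complex.Re (u n)).
    by apply: funext => n; rewrite ReJ.
  by rewrite ReJ.
have -> : (fun n => complex.Im (conjc (u n))) = (fun n => - complex.Im (u n)).
  by apply: funext => n; rewrite ImJ.
by rewrite ImJ; exact: cvgN h2.
Qed.

Lemma ccvgM u v a b : ccvg u a -> ccvg v b -> ccvg (fun n => u n * v n) (a * b).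
Proof.
case=> h1 h2 [h3 h4]; split.
  have -> : (fun n => complex.Re (u n * v n)) = (fun n => complex.Re (u n) * complex.Re (v n) - complex.Im (u n) * complex.Im (v n)).
    by apply: funext => n; rewrite ReM.
  by rewrite ReM; apply: cvgB; [exact: cvgM h1 h3 | exact: cvgM h2 h4].
have -> : (fun n => complex.Im (u n * v n)) = (fun n => complex.Re (u n) * complex.Im (v n) + complex.Im (u n) * complex.Re (v n)).
  by apply: funext => n; rewrite ImM.
by rewrite ImM; apply: cvgD; [exact: cvgM h1 h4 | exact: cvgM h2 h3].
Qed.

Lemma ccvg_sum (I : Type) (r : seq I) (F : I -> nat -> C) (L : I -> C) :
  (forall i, ccvg (F i) (L i)) ->
  ccvg (fun n => \sum_(i <- r) F i n) (\sum_(i <- r) L i).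
Proof.
move=> h; elim: r => [|j r IH].
  by rewrite big_nil; apply: ccvg_ext (ccvg_cst 0) => n; rewrite big_nil.
by rewrite big_cons; apply: ccvg_ext (ccvgD (h j) IH) => n; rewrite big_cons.
Qed.

End Cvg.

Section Aux.
Variable R : realType.
Local Notation C := R[i].

Lemma tr_delta n (M : 'M[C]_n) i j : \tr (M *m delta_mx i j) = M j i.
Proof.
rewrite tr_mulE (bigD1 j) //= [X in _ + X]big1 ?addr0; last first.
  by move=> k /negPf kj; apply: big1 => l _; rewrite mxE kj andbF mulr0.
rewrite -[RHS](sum_delta (M j) i); apply: eq_bigr => l _.
by rewrite mxE eqxx andbT.
Qed.

Lemma idx_eq m n (x x' : 'I_m) (y y' : 'I_n) :
  (mxtens_index (x, y) == mxtens_index (x', y')) = (x == x') && (y == y').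
Proof.
apply/eqP/andP => [/(congr1 (@mxtens_unindex m n))|[/eqP-> /eqP->]//].
by rewrite !mxtens_indexK => -[-> ->].
Qed.

Lemma tens_delta m n (a a' : 'I_m) (b b' : 'I_n) :
  delta_mx a a' *t delta_mx b b' = delta_mx (mxtens_index (a, b)) (mxtens_index (a', b')) :> 'M[C]_(m * n).
Proof.
apply/matrixP=> i j.
case: (mxtens_indexP i)=> x y; case: (mxtens_indexP j)=> x' y'.
rewrite tensmxE !mxE !idx_eq -natrM mulnb; congr ((_ : bool)%:R).
by rewrite -!andbA; congr (_ && _); rewrite andbCA.
Qed.

Lemma C0_of (z : C) : complex.Re z ^+ 2 + complex.Im z ^+ 2 <= 0 -> z = 0.
Proof.
case: z => a b /= h.
have ha : a = 0 by nra.
have hb : b = 0 by nra.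
by rewrite ha hb.
Qed.

End Aux.

Section Main.
Variable R : realType.
Local Notation C := R[i].
Variables (dA dB : nat).
Variables (sigma : nat -> 'M[C]_(dA * dB)) (rho : 'M[C]_(dA * dB)) (lambda : R).
Hypothesis hd : forall n, density (sigma n).
Hypothesis hc : mx_cvg sigma rho.
Hypothesis hl : (fun n => maxcorr (sigma n)) @ \oo --> lambda.

Lemma ccvg_tr K : ccvg (fun n => \tr (sigma n *m K)) (\tr (rho *m K)).
Proof.
apply: (@ccvg_ext _ (fun n => \sum_i \sum_j sigma n i j * K j i)) => [n|].
  by rewrite tr_mulE.
rewrite tr_mulE; apply: ccvg_sum => i; apply: ccvg_sum => j.
by apply: ccvgM (ccvg_cst _); exact: hc.
Qed.

Lemma ccvg_mA Z : ccvg (fun n => mA (sigma n) Z) (mA rho Z).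
Proof.
rewrite /mA ptrB_tr; apply: ccvg_ext (ccvg_tr _) => n.
by rewrite ptrB_tr.
Qed.

Lemma ccvg_mB Z : ccvg (fun n => mB (sigma n) Z) (mB rho Z).
Proof.
rewrite /mB ptrA_tr; apply: ccvg_ext (ccvg_tr _) => n.
by rewrite ptrA_tr.
Qed.

Lemma ccvg_Cv X Y : ccvg (fun n => Cv (sigma n) X Y) (Cv rho X Y).
Proof. exact: ccvgB (ccvg_tr _) (ccvgM (ccvg_mA _) (ccvg_mB _)). Qed.
Lemma ccvg_VA X : ccvg (fun n => VA (sigma n) X) (VA rho X).
Proof. exact: ccvgB (ccvg_mA _) (ccvgM (ccvg_mA _) (ccvgJ (ccvg_mA _))). Qed.
Lemma ccvg_VB Y : ccvg (fun n => VB (sigma n) Y) (VB rho Y).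
Proof. exact: ccvgB (ccvg_mB _) (ccvgM (ccvg_mB _) (ccvgJ (ccvg_mB _))). Qed.

Lemma lambda_ge0 : 0 <= lambda.
Proof.
apply: (ler_cvg_to (cvg_cst 0) hl); apply: nearW => n.
exact: maxcorr_ge0 (hd n).
Qed.

Lemma lim_key X Y :
  complex.Re (Cv rho X Y) ^+ 2 + complex.Im (Cv rho X Y) ^+ 2 <=
  lambda ^+ 2 * complex.Re (VA rho X) * complex.Re (VB rho Y).
Proof.
have [c1 c2] := ccvg_Cv X Y.
have [v1 _] := ccvg_VA X.
have [w1 _] := ccvg_VB Y.
rewrite !expr2.
apply: (ler_cvg_to (cvgD (cvgM c1 c1) (cvgM c2 c2))
                   (cvgM (cvgM (cvgM hl hl) v1) w1)).
apply: nearW => n /=.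
rewrite -!expr2; exact: key (hd n) X Y.
Qed.

End Main.

Unset Implicit Arguments.

Theorem lemma2 (R : realType) (dA dB : nat)
  (sigma : nat -> 'M[R[i]]_(dA * dB)) (rho : 'M[R[i]]_(dA * dB)) (lambda : R) :
  (forall n, density (sigma n)) ->
  mx_cvg sigma rho ->
  (fun n => maxcorr (sigma n)) @ \oo --> lambda ->
  maxcorr rho <= lambda /\
  (lambda = 0 -> rho = ptrB rho *t ptrA rho).
Proof.
move=> hd hc hl.
have l0 := lambda_ge0 hd hl.
have LK := lim_key hd hc hl.
split.
- rewrite maxcorrE; have [ne|e] := pselect (Sset rho !=set0).
    apply: (ge_sup ne) => r; case=> X [Y [h1 h2 h3 h4 ->]].
    have := LK X Y; rewrite /Cv /VA /VB /mA /mB h1 h2 h3 h4 !mul0r !subr0 /= !mulr1.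
    rewrite -normc_sq.
    have := normc_ge0 (\tr (rho *m (X *t adjmx Y))); nra.
  have -> : Sset rho = set0.
    by apply/seteqP; split=> x // Sx; apply: e; exists x.
  by rewrite sup0.
- move=> l_eq; subst lambda.
  have C0 X Y : Cv rho X Y = 0.
    by apply: C0_of; have := LK X Y; rewrite expr0n /= !mul0r.
  apply/matrixP=> i j.
  case: (mxtens_indexP i)=> a b; case: (mxtens_indexP j)=> a' b'.
  have := C0 (delta_mx a' a) (adjmx (delta_mx b' b)).
  rewrite /Cv adjmxK tens_delta tr_delta /mA /mB !tr_delta tensmxE.
  by move=> /eqP; rewrite subr_eq0 => /eqP.
Qed.
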